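(* Let $\mathcal{H}$ be a real Hilbert space, let $A\colon \mathcal{H}\rightrightarrows\mathcal{H}$ be maximally monotone and $B\colon\mathcal{H}\to\mathcal{H}$ monotone. Let $\alpha\geq0$ and $\beta,\lambda>0$, put $B':=B-\frac{\alpha}{\lambda}I$ and suppose $B'$ is $L'$-Lipschitz. Let $x\in (A+B)^{-1}(0)$ and, given $x_0,x_{-1}\in\mathcal{H}$, let $$z_{k+1} := J_{\lambda A}\Bigl( x_k - \lambda B(x_k) - \frac{\lambda}{\beta}(B'(x_k)- B'(x_{k-1})) \Bigr),\qquad x_{k+1} := (1-\beta) x_k + \beta z_{k+1}\quad\forall k\in\mathbb{N}.$$ Define $b_k:=2\lambda\langle B(x)-B(x_k),x-x_{k}\rangle$ (so $b_k\geq0$). Then for all $k\in\mathbb{N}$, $$(1-\alpha)\|x_{k+1}-x\|^2 +2\lambda\langle B'(x_{k+1})-B'(x_k),x-x_{k+1}\rangle + b_{k+1} \leq (1-\alpha)\|x_k-x\|^2 + 2\lambda\langle B'(x_k)-B'(x_{k-1}),x-x_k\rangle+ b_k +\frac{\lambda L'}{\beta}\|x_k-x_{k-1}\|^2 -\left(\frac{2-\beta-\lambda L'}{\beta}-\alpha \right) \|x_{k+1}-x_k\|^2.$$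
   Context: $J_{\lambda A}:=(I+\lambda A)^{-1}$ denotes the resolvent; $I$ is the identity. *)

(* Defs.v *)
From HB Require Import structures.
From mathcomp Require Import all_boot all_order all_algebra.
From mathcomp Require Import all_classical all_reals all_analysis.
Set Implicit Arguments. Unset Strict Implicit. Unset Printing Implicit Defensive.
Import Order.TTheory GRing.Theory Num.Theory.
Import numFieldNormedType.Exports.
Local Open Scope classical_set_scope.
Local Open Scope ring_scope.

(* A real Hilbert space: a complete normed space (over a realType R) whose
   norm is induced by the inner product [ip]: [ip] is symmetric, bilinear
   (linear in the first argument + symmetry) and [ip x x = `|x|^2]. *)
Definition is_inner_product (R : realType) (V : completeNormedModType R)
  (ip : V -> V -> R) : Prop :=
  (forall x y, ip x y = ip y x) /\
  (forall a x y z, ip (a *: x + y) z = a * ip x z + ip y z) /\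
  (forall x, ip x x = `|x| ^+ 2).

(* set-valued operators V ⇉ V are given by their graph: A x u <-> u ∈ A x *)
Definition monotone_op (R : realType) (V : completeNormedModType R)
  (ip : V -> V -> R) (A : V -> set V) : Prop :=
  forall x y u v, A x u -> A y v -> 0 <= ip (u - v) (x - y).

Definition maximally_monotone (R : realType) (V : completeNormedModType R)
  (ip : V -> V -> R) (A : V -> set V) : Prop :=
  monotone_op ip A /\
  forall A' : V -> set V, monotone_op ip A' ->
    (forall x u, A x u -> A' x u) -> forall x u, A' x u -> A x u.

Definition monotone_fun (R : realType) (V : completeNormedModType R)
  (ip : V -> V -> R) (B : V -> V) : Prop :=
  forall x y, 0 <= ip (B x - B y) (x - y).

Definition lipschitz_with (R : realType) (V : completeNormedModType R)
  (L : R) (f : V -> V) : Prop :=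
  0 <= L /\ forall x y, `|f x - f y| <= L * `|x - y|.

(* resolvent J_{lam A} = (I + lam A)^{-1}, as a set-valued operator:
   z ∈ J_{lam A} w  <->  w ∈ z + lam A z *)
Definition resolvent (R : realType) (V : completeNormedModType R)
  (lam : R) (A : V -> set V) (w : V) : set V :=
  [set z | exists u, A z u /\ w = z + lam *: u].

(* previous iterate: x_{k-1}, with x_{-1} := xm1 *)
Definition prev_iter (V : Type) (x : nat -> V) (xm1 : V) (k : nat) : V :=
  if k is k'.+1 then x k' else xm1.

(* Main.v *)
Require Import Defs.
From HB Require Import structures.
From mathcomp Require Import all_boot all_order all_algebra.
From mathcomp Require Import all_classical all_reals all_analysis.
From mathcomp Require Import ring lra.
Import Order.TTheory GRing.Theory Num.Theory.
Import numFieldNormedType.Exports.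
Local Open Scope classical_set_scope.
Local Open Scope ring_scope.

Section IP.
Variables (R : realType) (V : completeNormedModType R) (ip : V -> V -> R).
Hypothesis Hip : is_inner_product ip.

Lemma ipC x y : ip x y = ip y x. Proof. by case: Hip. Qed.
Lemma ipDl x y z : ip (x + y) z = ip x z + ip y z.
Proof. case: Hip => _ [H _]; by have := H 1 x y z; rewrite scale1r mul1r. Qed.
Lemma ip0l z : ip 0 z = 0.
Proof. have := ipDl 0 0 z; rewrite addr0 => H; lra. Qed.
Lemma ipZl a x z : ip (a *: x) z = a * ip x z.
Proof. case: Hip => _ [H _]; by have := H a x 0 z; rewrite addr0 ip0l addr0. Qed.
Lemma ipNl x z : ip (- x) z = - ip x z.
Proof. by rewrite -scaleN1r ipZl mulN1r. Qed.
Lemma ipDr x y z : ip z (x + y) = ip z x + ip z y.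
Proof. by rewrite ipC ipDl !(ipC z). Qed.
Lemma ipZr a x z : ip z (a *: x) = a * ip z x.
Proof. by rewrite ipC ipZl ipC. Qed.
Lemma ipNr x z : ip z (- x) = - ip z x.
Proof. by rewrite ipC ipNl ipC. Qed.
Lemma ipn x : `|x| ^+ 2 = ip x x.
Proof. by case: Hip => _ [_ ->]. Qed.

Lemma cs_lip (L : R) (D e f : V) : 0 <= L -> `|D| <= L * `|f| ->
  0 <= 2 * ip D e + L * (ip e e + ip f f).
Proof.
move=> L0 HD.
have [L00|Lp] := eqVneq L 0.
  move: HD; rewrite L00 mul0r normr_le0 => /eqP ->.
  by rewrite ip0l mulr0 mul0r addr0.
have Lpos : 0 < L by rewrite lt_def Lp L0.
have H1 : 0 <= ip (D + L *: e) (D + L *: e) by rewrite -ipn exprn_ge0.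
rewrite !(ipDl, ipDr, ipZl, ipZr) (ipC e D) in H1.
have H2 : ip D D <= L^+2 * ip f f.
  rewrite -!ipn -exprMn; apply: lerXn2r => //; rewrite nnegrE //.
  by rewrite mulr_ge0.
rewrite -(pmulr_rge0 _ Lpos).
nra.
Qed.

Lemma le_from (l r p : R) : r - l = p -> 0 <= p -> l <= r.
Proof. move=> <-; by rewrite subr_ge0. Qed.

Lemma key (alpha beta lam L' : R) (X P Y S BX BP BY BS zz u us : V) :
 0 < beta -> 0 < lam -> 0 <= L' ->
 `|(BX - (alpha/lam) *: X) - (BP - (alpha/lam) *: P)| <= L' * `|X - P| ->
 0 <= ip (u - us) (zz - S) -> us + BS = 0 ->
 X - lam *: BX - (lam/beta) *: ((BX - (alpha/lam) *: X) - (BP - (alpha/lam) *: P)) = zz + lam *: u ->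
 Y = (1-beta) *: X + beta *: zz ->
 0 <= ip (BX - BS) (X - S) ->
 (1 - alpha) * `|Y - S| ^+ 2 + 2 * lam * ip ((BY - (alpha/lam) *: Y) - (BX - (alpha/lam) *: X)) (S - Y)
   + 2 * lam * ip (BS - BY) (S - Y)
 <= (1 - alpha) * `|X - S| ^+ 2 + 2 * lam * ip ((BX - (alpha/lam) *: X) - (BP - (alpha/lam) *: P)) (S - X)
   + 2 * lam * ip (BS - BX) (S - X) + (lam * L' / beta) * `|X - P| ^+ 2
   - ((2 - beta - lam * L') / beta - alpha) * `|Y - X| ^+ 2.
Proof.
move=> b0 l0 L0 HL HA Hus HW HY HB.
have Q := cs_lip _ _ (Y - X) _ L0 HL.
have hu : u = lam^-1 *: (X - lam *: BX - (lam/beta) *: ((BX - (alpha/lam) *: X) - (BP - (alpha/lam) *: P)) - zz).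
  by rewrite HW addrAC subrr add0r scalerA mulVf ?scale1r // gt_eqF.
have hz : zz = beta^-1 *: (Y - (1-beta) *: X).
  by rewrite HY addrAC subrr add0r scalerA mulVf ?scale1r // gt_eqF.
have hus : us = - BS by rewrite -(addrK BS us) Hus sub0r.
apply: (@le_from _ _ (2*beta*lam*ip (u-us) (zz-S) + 2*lam*beta*ip (BX-BS) (X-S)
   + (lam/beta) * (2 * ip ((BX - (alpha/lam) *: X) - (BP - (alpha/lam) *: P)) (Y - X)
      + L' * (ip (Y - X) (Y - X) + ip (X - P) (X - P))))); last first.
  have b1 := ltW b0; have l1 := ltW l0.
  have h2 : 0 <= 2 :> R by [].
  apply: addr_ge0; [apply: addr_ge0|].
  - by do 3 apply: mulr_ge0 => //.
  - by do 3 apply: mulr_ge0 => //.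
  - by apply: mulr_ge0 => //; apply: divr_ge0.
rewrite hu hus hz !ipn.
rewrite !(ipDl, ipDr, ipNl, ipNr, ipZl, ipZr).
rewrite ?(ipC P X) ?(ipC Y X) ?(ipC S X) ?(ipC BX X) ?(ipC BP X) ?(ipC BY X) ?(ipC BS X) ?(ipC Y P) ?(ipC S P) ?(ipC BX P) ?(ipC BP P) ?(ipC BY P) ?(ipC BS P) ?(ipC S Y) ?(ipC BX Y) ?(ipC BP Y) ?(ipC BY Y) ?(ipC BS Y) ?(ipC BX S) ?(ipC BP S) ?(ipC BY S) ?(ipC BS S) ?(ipC BP BX) ?(ipC BY BX) ?(ipC BS BX) ?(ipC BY BP) ?(ipC BS BP) ?(ipC BS BY).
field.
by rewrite !gt_eqF.
Qed.
End IP.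

Theorem lemma4p2 (R : realType) (V : completeNormedModType R)
  (ip : V -> V -> R) (A : V -> set V) (B : V -> V)
  (alpha beta lam L' : R) (xs xm1 : V) (x z : nat -> V) :
  is_inner_product ip ->
  maximally_monotone ip A ->
  monotone_fun ip B ->
  0 <= alpha -> 0 < beta -> 0 < lam ->
  lipschitz_with L' (fun y => B y - (alpha / lam) *: y) ->
  (exists u, A xs u /\ u + B xs = 0) ->
  (forall k, z k.+1 \in resolvent lam A
     (x k - lam *: B (x k)
      - (lam / beta) *: ((B (x k) - (alpha / lam) *: x k)
           - (B (prev_iter x xm1 k) - (alpha / lam) *: prev_iter x xm1 k)))) ->
  (forall k, x k.+1 = (1 - beta) *: x k + beta *: z k.+1) ->
  let B' := fun y => B y - (alpha / lam) *: y in
  let b := fun k => 2 * lam * ip (B xs - B (x k)) (xs - x k) in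
  forall k,
    (1 - alpha) * `|x k.+1 - xs| ^+ 2
      + 2 * lam * ip (B' (x k.+1) - B' (x k)) (xs - x k.+1) + b k.+1
    <= (1 - alpha) * `|x k - xs| ^+ 2
      + 2 * lam * ip (B' (x k) - B' (prev_iter x xm1 k)) (xs - x k) + b k
      + (lam * L' / beta) * `|x k - prev_iter x xm1 k| ^+ 2
      - ((2 - beta - lam * L') / beta - alpha) * `|x k.+1 - x k| ^+ 2.
Proof.
move=> Hip [HmA _] HmB a0 b0 l0 [L0 HL] [us [Aus Hus]] Hz Hx B' b k.
rewrite /B' /b.
have := Hz k; rewrite inE => -[u [Au HW]].
apply: (@key _ _ ip Hip _ _ _ _ _ _ _ _ _ _ _ _ (z k.+1) u us) => //.
exact: HmA.
Qed.
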